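(* Let $N,m,d$ be natural numbers with $d\geqslant m+1$, and let $c,C,\varepsilon$ be positive constants. Let $L:\mathbb{R}^d\to\mathbb{R}^m$ be a surjective linear map with $\Vert L\Vert_\infty\leqslant C$ and $\operatorname{dist}(L,V_{\mathrm{rank}}(m,d))\geqslant c$. Let $F:\mathbb{R}^d\to[0,1]$ be supported on $[-N,N]^d$ and $G:\mathbb{R}^m\to[0,1]$ supported on $[-\varepsilon,\varepsilon]^m$. Then $T^L_{F,G,N}(1,\dots,1)\ll_{c,C,\varepsilon}\Vert G\Vert_\infty$.
   Context: Matrices identified with linear maps; $\Vert L\Vert_\infty$ max absolute entry; $\operatorname{dist}$ is $\ell^\infty$ distance on entries; $V_{\mathrm{rank}}(m,d)$ is the set of $m\times d$ real matrices of rank $<m$; $\Vert G\Vert_\infty=\sup|G|$. $T^L_{F,G,N}(1,\dots,1)=N^{-(d-m)}\sum_{\mathbf n\in\mathbb{Z}^d}F(\mathbf n)G(L\mathbf n)$. Implied constants depend on $c,C,\varepsilon,m,d$. *)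

(* Defs.v *)
From HB Require Import structures.
From mathcomp Require Import all_boot all_order all_algebra.
From mathcomp Require Import all_classical all_reals all_analysis.
Set Implicit Arguments. Unset Strict Implicit. Unset Printing Implicit Defensive.
Import Order.TTheory GRing.Theory Num.Theory.
Local Open Scope classical_set_scope.
Local Open Scope ring_scope.

(* Vectors of R^k are column vectors 'cV[R]_k; the linear map L : R^d -> R^m is
   the m x d matrix acting by x |-> L *m x. *)

Definition mx_max_abs (R : realType) (p q : nat) (A : 'M[R]_(p, q)) : R :=
  \big[Num.max/0]_(ij : 'I_p * 'I_q) `|A ij.1 ij.2|.

Definition Vrank (R : realType) (m d : nat) : set 'M[R]_(m, d) :=
  [set M | (\rank M < m)%N].

(* l^infty distance from L to a set of matrices (an extended real; +oo for the empty set) *)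
Definition mx_dist (R : realType) (m d : nat) (L : 'M[R]_(m, d))
    (V : set 'M[R]_(m, d)) : \bar R :=
  ereal_inf [set (mx_max_abs (L - M))%:E | M in V].

Definition sup_norm (R : realType) (k : nat) (G : 'cV[R]_k -> R) : R :=
  sup (range (fun y => `|G y|)).

Definition lat (R : realType) (d : nat) (n : 'cV[int]_d) : 'cV[R]_d :=
  map_mx (fun z : int => z%:~R) n.

Definition T_LFGN (R : realType) (m d N : nat) (L : 'M[R]_(m, d))
    (F : 'cV[R]_d -> R) (G : 'cV[R]_m -> R) : \bar R :=
  ((N%:R ^- (d - m))%:E *
   \esum_(n in [set: 'cV[int]_d]) (F (lat R n) * G (L *m lat R n))%:E)%E.
Arguments Vrank R m d : clear implicits.

(* Main.v *)
Require Import Defs.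
From HB Require Import structures.
From mathcomp Require Import all_boot all_order all_algebra.
From mathcomp Require Import all_classical all_reals all_analysis.
From mathcomp Require Import ring lra zify.
Import Order.TTheory GRing.Theory Num.Theory.
Local Open Scope classical_set_scope.
Local Close Scope classical_set_scope.
Local Open Scope ring_scope.

Lemma card_interval (R : realType) n (S : {set 'I_n}) (l : R) : 0 <= l ->
  (forall s t, s \in S -> t \in S -> (s : nat)%:R - (t : nat)%:R <= l) ->
  (#|S|%:R : R) <= l + 1.
Proof.
move=> l0 HS.
have [->|[x0 Sx0]] := set_0Vmem S.
  by rewrite cards0; lra.
case: (arg_minnP (fun i : 'I_n => (i : nat)) Sx0) => t0 St0 Hmin.
case: (arg_maxnP (fun i : 'I_n => (i : nat)) Sx0) => t1 St1 Hmax.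
have le01 : (t0 <= t1)%N by apply: Hmin.
have : (#|S| <= (t1 - t0).+1)%N.
  have -> : (t1 - t0).+1 = #|'I_(t1 - t0).+1| by rewrite card_ord.
  apply: (@leq_card_in _ _ (fun s : 'I_n => (inord (s - t0) : 'I_(t1 - t0).+1))).
  move=> s s' Ss Ss' /(congr1 val) /=.
  have hs := Hmin s Ss; have hs' := Hmin s' Ss'.
  have hs1 := Hmax s Ss; have hs1' := Hmax s' Ss'.
  rewrite !inordK; last 2 first.
  - by rewrite ltnS leq_sub2r.
  - by rewrite ltnS leq_sub2r.
  by move=> e; apply: val_inj => /=; lia.
rewrite -(ler_nat R) => H; apply: (le_trans H).
rewrite -addn1 natrD natrB //.
have := HS _ _ St1 St0; lra.
Qed.

Definition mid N : 'I_(N.*2.+1) := inord N.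
Definition vv (R : realType) d N (f : {ffun 'I_d -> 'I_(N.*2.+1)}) (i : 'I_d) : R :=
  ((f i : nat)%:R - N%:R).
Arguments vv {R d N}.
Definition dot (R : realType) d N (r : 'I_d -> R) (f : {ffun 'I_d -> 'I_(N.*2.+1)}) : R :=
  \sum_i r i * vv f i.
Arguments dot {R d N}.
Definition zer d N (j : 'I_d) (f : {ffun 'I_d -> 'I_(N.*2.+1)}) : {ffun 'I_d -> 'I_(N.*2.+1)} :=
  [ffun i => if i == j then mid N else f i].
Arguments zer {d N}.
Definition Aset (R : realType) d N (rs : seq ('I_d -> R)) (J : {set 'I_d}) (eps : R)
  : {set {ffun 'I_d -> 'I_(N.*2.+1)}} :=
  [set f : {ffun 'I_d -> 'I_(N.*2.+1)} | [forall j in J, f j == mid N] && all (fun r => `|dot r f| <= eps) rs].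

Arguments Aset {R d} N.
Lemma card_fiber (R : realType) d N (A : {set {ffun 'I_d -> 'I_(N.*2.+1)}}) j (l : R) :
  0 <= l ->
  (forall f g, f \in A -> g \in A -> zer j f = zer j g ->
     (f j : nat)%:R - (g j : nat)%:R <= l) ->
  (#|A|%:R : R) <= (l + 1) * #|zer j @: A|%:R.
Proof.
move=> l0 H.
rewrite -sumr_const (partition_big_imset (zer j)) /= mulr_natr -sumr_const.
apply: ler_sum => y _.
set B := [set f in A | zer j f == y].
rewrite (eq_bigl (mem B)); last by move=> f; rewrite /B !inE.
rewrite sumr_const.
have -> : #|B| = #|(fun f : {ffun 'I_d -> 'I_(N.*2.+1)} => f j) @: B|.
  rewrite card_in_imset // => f g; rewrite !inE => /andP[_ /eqP fy] /andP[_ /eqP gy] e.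
  apply/ffunP => i; case: (eqVneq i j) => [->//|nij].
  have : zer j f i = zer j g i by rewrite fy gy.
  by rewrite !ffunE (negbTE nij).
apply: card_interval => // s t /imsetP[f Bf ->] /imsetP[g Bg ->].
move: Bf Bg; rewrite !inE => /andP[Af /eqP fy] /andP[Ag /eqP gy].
by apply: H => //; rewrite fy gy.
Qed.

Lemma vv_zer (R : realType) d N j (f : {ffun 'I_d -> 'I_(N.*2.+1)}) i :
  vv (R:=R) (zer j f) i = if i == j then 0 else vv f i.
Proof.
rewrite /vv ffunE; case: (i == j) => //.
by rewrite /mid inordK ?subrr // ltnS -addnn leq_addr.
Qed.

Lemma dot_diff (R : realType) d N (r : 'I_d -> R) j (f g : {ffun 'I_d -> 'I_(N.*2.+1)}) :
  zer j f = zer j g ->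
  dot r f - dot r g = r j * ((f j : nat)%:R - (g j : nat)%:R).
Proof.
move=> e; rewrite /dot -sumrB (bigD1 j) //= big1 ?addr0.
  by rewrite /vv; ring.
move=> i nij; have : zer j f i = zer j g i by rewrite e.
by rewrite !ffunE (negbTE nij) /vv => ->; rewrite subrr.
Qed.

Lemma dot_zer (R : realType) d N (r : 'I_d -> R) j (f : {ffun 'I_d -> 'I_(N.*2.+1)}) :
  r j = 0 -> dot r (zer j f) = dot r f.
Proof.
move=> rj; rewrite /dot; apply: eq_bigr => i _; rewrite vv_zer.
by case: eqP => [->|//]; rewrite rj !mul0r.
Qed.

Lemma dot_lin (R : realType) d N (q r : 'I_d -> R) (s : R) (f : {ffun 'I_d -> 'I_(N.*2.+1)}) :
  dot (fun i => q i - s * r i) f = dot q f - s * dot r f.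
Proof.
rewrite /dot mulr_sumr -sumrB; apply: eq_bigr => i _; ring.
Qed.

Lemma base_count (R : realType) d N (eps : R) : forall n (J : {set 'I_d}),
  #|~: J| = n -> (#|Aset N [::] J eps|%:R : R) <= (N.*2.+1)%:R ^+ n.
Proof.
elim=> [|n IH] J hJ.
  rewrite expr0.
  have Hs : Aset N [::] J eps \subset [set ([ffun=> mid N] : {ffun 'I_d -> 'I_(N.*2.+1)})].
    apply/fintype.subsetP => f; rewrite inE andbT => /forallP Hf; rewrite inE.
    apply/eqP/ffunP => i; rewrite ffunE; apply/eqP; apply: (implyP (Hf i)).
    apply: contraT => iJ.
    have : i \in ~: J by rewrite inE.
    by move/card0_eq: hJ => /(_ i) ->.
  have := subset_leq_card Hs.
  have h1 : (#|[set ([ffun=> mid N] : {ffun 'I_d -> 'I_(N.*2.+1)})]| <= 1)%N by rewrite cards1.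
  move=> H; have := leq_trans H h1; by rewrite -(ler_nat R).
have [j jJ] : exists j, j \in ~: J.
  by apply/card_gt0P; rewrite hJ.
apply: (le_trans (@card_fiber R d N _ j (N.*2)%:R _ _)).
- by rewrite ler0n.
- move=> f g _ _ _.
  have := ltn_ord (f j); have := ltn_ord (g j); rewrite !ltnS => _.
  rewrite -(ler_nat R) => hf.
  have := ler0n R (g j); lra.
rewrite GRing.exprS -natr1 mulrC [X in _ <= X]mulrC ler_pM2r; last by have := ler0n R N.*2; lra.
  rewrite natr1; apply: le_trans (IH (j |: J) _).
    rewrite ler_nat; apply: subset_leq_card; apply/fintype.subsetP => y /imsetP[f].
    rewrite inE andbT => /forallP Hf ->.
    rewrite inE andbT; apply/forallP => i; apply/implyP; rewrite !inE ffunE.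
    by case/orP=> [->//|iJ]; case: (i == j) => //; apply: (implyP (Hf i)).
  have e : ~: (j |: J) = (~: J) :\ j.
    by apply/setP => i; rewrite !inE negb_or.
  by rewrite e; move: hJ; rewrite (cardsD1 j) jJ => -[].
Qed.

Fixpoint comb (R : realType) d (rs : seq ('I_d -> R)) (a : nat -> R) (j : 'I_d) : R :=
  if rs is r :: rs' then a 0%N * r j + @comb R d rs' (fun n => a n.+1) j else 0.
Arguments comb {R d}.


Definition dual (R : realType) d (rs : seq ('I_d -> R)) (J : {set 'I_d}) (c : R) :=
  forall a k M, (k < size rs)%N -> 0 <= M ->
    (forall j, j \notin J -> `|comb rs a j| <= M) -> c * `|a k| <= M.

Arguments dual {R d}.
Fixpoint Kc (R : realType) (c : R) k (C eps : R) : R :=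
  if k is k'.+1 then (2 * eps / c + 1) * @Kc R c k' (C + C * C / c) (eps + C * eps / c)
  else 1.

Arguments Kc {R}.
Lemma Kc_gt0 (R : realType) (c : R) k : 0 < c -> forall C eps, 0 <= C -> 0 <= eps -> 0 < Kc c k C eps.
Proof.
move=> c0; elim: k => [|k IH] C eps C0 e0 /=; first exact: ltr01.
apply: mulr_gt0; last by apply: IH; rewrite ?addr_ge0 ?divr_ge0 ?mulr_ge0 // ltW.
have : 0 <= 2 * eps / c by rewrite divr_ge0 ?mulr_ge0 // ltW.
lra.
Qed.

Lemma comb0 (R : realType) d (rs : seq ('I_d -> R)) a j :
  (forall n, a n = 0) -> comb rs a j = 0.
Proof.
elim: rs a => [|r rs IH] a H //=.
by rewrite H mul0r add0r IH.
Qed.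

Lemma comb_map (R : realType) d (rs : seq ('I_d -> R)) (r : 'I_d -> R) j a i :
  r j != 0 ->
  comb (map (fun q i => q i - q j / r j * r i) rs) a i =
  comb rs a i - comb rs a j / r j * r i.
Proof.
move=> rj; elim: rs a => [|q rs IH] a /=; first by rewrite !mul0r subr0.
rewrite IH; field; done.
Qed.

Lemma comb_sum (R : realType) d (rs : seq ('I_d -> R)) a j :
  comb rs a j = \sum_(k < size rs) a k * nth (fun _ => 0) rs k j.
Proof.
elim: rs a => [|r rs IH] a /=; first by rewrite big_ord0.
by rewrite big_ord_recl IH.
Qed.

Lemma count_main (R : realType) d N (c : R) : 0 < c -> forall k (rs : seq ('I_d -> R)) (J : {set 'I_d}) (C eps : R),
  size rs = k -> 0 <= C -> 0 <= eps -> dual rs J c ->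
  (forall r, r \in rs -> forall i, `|r i| <= C) ->
  (#|Aset N rs J eps|%:R : R) * (N.*2.+1)%:R ^+ k <= Kc c k C eps * (N.*2.+1)%:R ^+ #|~: J|.
Proof.
move=> c0; elim=> [|k IH] [|r rs] J C eps //= hs C0 e0 hd hC.
  by rewrite expr0 mulr1 mul1r; apply: base_count.
case: hs => hs.
have [j jJ rj] : exists2 j, j \notin J & c <= `|r j|.
  case: (pselect (exists2 j, j \notin J & c <= `|r j|)) => // Hn; exfalso.
  pose M := \big[Num.max/0]_(j | j \notin J) `|r j|.
  have M0 : 0 <= M.
    rewrite /M; elim/big_ind: _ => //= x y x0 y0; rewrite le_max x0 //.
  have Mc : M < c.
    apply: bigmax_lt => // i iJ; rewrite ltNge; apply/negP => ci.
    by apply: Hn; exists i.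
  have := hd (fun n => if n is 0%N then 1 else 0) 0%N M (ltn0Sn _) M0.
  rewrite normr1 mulr1 => /(_ _) H.
  suff : c <= M by lra.
  apply: H => i iJ; rewrite /= mul1r comb0 ?addr0 //.
  exact: le_bigmax_cond.
have rj0 : r j != 0 by rewrite -normr_gt0; lra.
have rjc : c <= `|r j| by [].
set rs2 := map (fun q i => q i - q j / r j * r i) rs.
have C2 : 0 <= C + C * C / c by rewrite addr_ge0 ?divr_ge0 ?mulr_ge0 // ltW.
have e2 : 0 <= eps + C * eps / c by rewrite addr_ge0 ?divr_ge0 ?mulr_ge0 // ltW.
have hd2 : dual rs2 (j |: J) c.
  move=> a k' M hk M0 HM.
  pose a' n := if n is n'.+1 then a n' else - (comb rs a j / r j).
  have := hd a' k'.+1 M _ M0.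
  apply; first by move: hk; rewrite /rs2 size_map.
  move=> i iJ /=.
  have -> : a' 0%N * r i + comb rs (fun n => a' n.+1) i = comb rs2 a i.
    by rewrite /rs2 comb_map //=; ring.
  case: (eqVneq i j) => [->|nij].
    by rewrite /rs2 comb_map // mulfVK // subrr normr0.
  by apply: HM; rewrite !inE negb_or nij.
have hC2 : forall q, q \in rs2 -> forall i, `|q i| <= C + C * C / c.
  move=> q /mapP[q0 q0rs ->] i.
  have q0in : q0 \in r :: rs by rewrite inE q0rs orbT.
  have h1 := hC _ q0in i; have h2 := hC _ q0in j.
  have h3 := hC r (mem_head _ _) i.
  have rjp : 0 < `|r j| by lra.
  have hx : `|q0 j| / `|r j| <= C / c.
    apply: (@le_trans _ _ (`|q0 j| / c)).
      by apply: ler_wpM2l => //; rewrite lef_pV2 ?posrE.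
    by apply: ler_wpM2r => //; rewrite invr_ge0 ltW.
  have hy : `|q0 j| / `|r j| * `|r i| <= C / c * C.
    apply: ler_pM => //; by rewrite divr_ge0.
  rewrite (le_trans (ler_normB _ _)) // normrM normf_div.
  have -> : C * C / c = C / c * C by rewrite mulrAC.
  by rewrite lerD.
have IH2 := IH rs2 (j |: J) _ _ (etrans (size_map _ rs) hs) C2 e2 hd2 hC2.
set A := Aset N (r :: rs) J eps.
have l0 : 0 <= 2 * eps / c by rewrite divr_ge0 ?mulr_ge0 // ltW.
have hfib : (#|A|%:R : R) <= (2 * eps / c + 1) * #|zer j @: A|%:R.
  apply: card_fiber => // f g; rewrite !inE /= => /andP[_ /andP[hf _]] /andP[_ /andP[hg _]] e.
  have := @dot_diff R d N r j f g e.
  move=> hdiff.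
  set x := ((f j : nat)%:R - (g j : nat)%:R : R) in hdiff *.
  have hx : `|r j| * `|x| <= 2 * eps.
    rewrite -normrM -hdiff (le_trans (ler_normB _ _)) //; lra.
  rewrite (le_trans (ler_norm x)) // ler_pdivlMr // mulrC.
  apply: le_trans hx; apply: ler_wpM2r => //.
have hsub : (#|zer j @: A| <= #|Aset N rs2 (j |: J) (eps + C * eps / c)|)%N.
  apply: subset_leq_card; apply/fintype.subsetP => y /imsetP[f].
  rewrite inE /= => /andP[/forallP Hf /andP[hf hall]] ->.
  rewrite inE; apply/andP; split.
    apply/forallP => i; apply/implyP; rewrite !inE ffunE.
    by case/orP=> [->//|iJ]; case: (i == j) => //; apply: (implyP (Hf i)).
  apply/allP => q /mapP[q0 q0rs ->].
  rewrite dot_zer; last by rewrite mulfVK // subrr.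
  rewrite dot_lin.
  have hq := (allP hall) q0 q0rs; rewrite /= in hq.
  have q0in : q0 \in r :: rs by rewrite inE q0rs orbT.
  have h2 := hC _ q0in j.
  have hx : `|q0 j / r j| <= C / c.
    rewrite normf_div.
    apply: (@le_trans _ _ (`|q0 j| / c)).
      by apply: ler_wpM2l => //; rewrite lef_pV2 ?posrE //; lra.
    by apply: ler_wpM2r => //; rewrite invr_ge0 ltW.
  rewrite (le_trans (ler_normB _ _)) // lerD // normrM.
  rewrite -mulrA [X in _ <= X]mulrC -mulrA mulrC; apply: ler_pM => //.
  by rewrite mulrC.
have e : ~: (j |: J) = (~: J) :\ j.
  by apply/setP => i; rewrite !inE negb_or.
have hcard : #|~: J| = (#|~: (j |: J)|).+1.
  by rewrite e (cardsD1 j (~: J)) inE jJ.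
set a : R := (N.*2.+1)%:R.
have a0 : 0 <= a by rewrite ler0n.
set A2 := Aset N rs2 (j |: J) (eps + C * eps / c) in hsub IH2.
have h1 : (#|A|%:R : R) * a ^+ k <= (2 * eps / c + 1) * (#|A2|%:R * a ^+ k).
  rewrite mulrA; apply: ler_wpM2r; first exact: exprn_ge0.
  apply: (le_trans hfib); apply: ler_wpM2l; first lra.
  by rewrite ler_nat.
have h2 := ler_wpM2l (_ : 0 <= 2 * eps / c + 1) IH2.
set K2 := Kc c k (C + C * C / c) (eps + C * eps / c) in h2 *.
set l := 2 * eps / c in l0 h1 h2 *.
set P := a ^+ #|~: (j |: J)| in h2 *.
rewrite hcard !GRing.exprS -/P.
have -> : (l + 1) * K2 * (a * P) = a * ((l + 1) * (K2 * P)) by ring.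
rewrite mulrCA; apply: ler_wpM2l => //.
apply: (le_trans h1); apply: h2; lra.
Qed.

Lemma entry_le (R : realType) m d (L : 'M[R]_(m, d)) i j : `|L i j| <= mx_max_abs L.
Proof.
exact: (le_bigmax _ (fun ij : 'I_m * 'I_d => `|L ij.1 ij.2|) (i, j)).
Qed.

Lemma dist_dual (R : realType) m d (L : 'M[R]_(m, d)) (c : R) (a : 'I_m -> R) (k : 'I_m) (M : R) :
  (c%:E <= mx_dist L (Vrank R m d))%E -> 0 <= M ->
  (forall j, `|\sum_i a i * L i j| <= M) -> c * `|a k| <= M.
Proof.
move=> hc M0 hM.
case: (eqVneq (a k) 0) => [->|ak0]; first by rewrite normr0 mulr0.
pose w : 'cV[R]_m := \col_i (if i == k then (a k)^-1 else 0).
pose v : 'rV[R]_d := \row_j \sum_i a i * L i j.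
pose Mx := L - w *m v.
have wv : forall i j, (w *m v) i j = w i 0 * v 0 j.
  by move=> i j; rewrite mxE big_ord1.
have rk : (\rank Mx < m)%N.
  rewrite ltnNge; apply/negP => hr.
  have rf : row_free Mx by rewrite /row_free eqn_leq rank_leq_row hr.
  pose u : 'rV[R]_m := \row_i a i.
  have u0 : u *m Mx = 0 *m Mx.
    rewrite mul0mx; apply/matrixP => x y; rewrite !mxE.
    have -> : \sum_i u x i * Mx i y = \sum_i a i * L i y - (\sum_i a i * w i 0) * v 0 y.
      rewrite mulr_suml -sumrB; apply: eq_bigr => i _.
      by rewrite /Mx !mxE big_ord1 !mxE; ring.
    have s1 : \sum_i a i * w i 0 = 1.
      rewrite (bigD1 k) //= big1 ?addr0; last first.
        by move=> i /negbTE nik; rewrite !mxE nik mulr0.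
      by rewrite !mxE eqxx mulfV.
    by rewrite s1 mul1r !mxE subrr.
  have := row_free_inj rf u0 => /matrixP /(_ 0 k); rewrite !mxE => ak.
  by rewrite ak eqxx in ak0.
have h1 : (c%:E <= (mx_max_abs (L - Mx))%:E)%E.
  apply: (le_trans hc); apply: ereal_inf_lbound; exists Mx => //.
have e : L - Mx = w *m v by rewrite /Mx opprB addrC subrK.
rewrite e in h1.
have h2 : mx_max_abs (w *m v) <= M / `|a k|.
  apply: bigmax_le => [|[i j] _]; first by rewrite divr_ge0.
  rewrite wv !mxE /=; case: (i == k).
    by rewrite normrM normfV mulrC; apply: ler_wpM2r => //; rewrite invr_ge0.
  by rewrite mul0r normr0 divr_ge0.
rewrite lee_fin in h1.
by rewrite -ler_pdivlMr ?normr_gt0 // (le_trans h1).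
Qed.

Definition phi d N (f : {ffun 'I_d -> 'I_(N.*2.+1)}) : 'cV[int]_d :=
  \col_i ((f i : nat)%:Z - N%:Z).

Arguments phi {d N}.
Lemma lat_phi (R : realType) d N (f : {ffun 'I_d -> 'I_(N.*2.+1)}) i :
  lat R (phi f) i 0 = vv f i.
Proof. by rewrite /lat /phi !mxE rmorphB. Qed.

Lemma phi_inj d N : injective (@phi d N).
Proof.
move=> f g /matrixP e; apply/ffunP => i; apply: val_inj.
by have := e i 0; rewrite !mxE => /eqP; rewrite (can_eq (subrK _)) => /eqP [].
Qed.

Lemma phi_surj (R : realType) d N (n : 'cV[int]_d) :
  (forall i, `|lat R n i 0| <= N%:R) -> exists f : {ffun 'I_d -> 'I_(N.*2.+1)}, phi f = n.
Proof.
move=> hb.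
have hi : forall i, (`|n i 0| <= N%:Z)%R.
  move=> i; have := hb i; rewrite /lat mxE -intr_norm.
  by rewrite -[N%:R]/((N%:Z)%:~R) ler_int.
exists [ffun i => inord (absz (n i 0 + N%:Z)%R)].
apply/matrixP => i j; rewrite (ord1 j) !mxE ffunE.
have := hi i; rewrite ler_norml => /andP[h1 h2].
rewrite inordK.
  rewrite gez0_abs; first by rewrite addrK.
  lia.
lia.
Qed.

Lemma sup_norm_ub (R : realType) m (G : 'cV[R]_m -> R) :
  (forall y, 0 <= G y <= 1) -> forall y, G y <= sup_norm G.
Proof.
move=> hG y.
have hs : has_sup (range (fun y => `|G y|)).
  split; first by exists `|G y|, y.
  exists 1 => _ [z _ <-]; by case/andP: (hG z) => h0 h1; rewrite ger0_norm.
apply: (le_trans (ler_norm _)); apply: sup_upper_bound => //; by exists y.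
Qed.

Lemma esum_bound (R : realType) m d N (L : 'M[R]_(m, d)) (F : 'cV[R]_d -> R)
    (G : 'cV[R]_m -> R) (eps : R) :
  (forall x, 0 <= F x <= 1) -> (forall x, F x != 0 -> forall i, `|x i ord0| <= N%:R) ->
  (forall y, 0 <= G y <= 1) -> (forall y, G y != 0 -> forall i, `|y i ord0| <= eps) ->
  (\esum_(n in [set: 'cV[int]_d]) (F (lat R n) * G (L *m lat R n))%:E <=
   (sup_norm G * #|Aset N (map (fun i : 'I_m => fun j : 'I_d => L i j) (enum 'I_m)) finset.set0 eps|%:R)%:E)%E.
Proof.
move=> hF hFs hG hGs.
set A := Aset _ _ _ _.
have g0 : forall n, (0 <= (F (lat R n) * G (L *m lat R n))%:E)%E.
  move=> n; rewrite lee_fin mulr_ge0 //; [by case/andP: (hF (lat R n)) | by case/andP: (hG (L *m lat R n))].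
have -> : \esum_(n in [set: 'cV[int]_d]) (F (lat R n) * G (L *m lat R n))%:E =
          \esum_(n in (@phi d N) @` [set: {ffun 'I_d -> 'I_(N.*2.+1)}]) (F (lat R n) * G (L *m lat R n))%:E.
  rewrite [in RHS]esum_mkcond; apply: eq_esum => n _.
  case: ifPn => // nin.
  case: (eqVneq (F (lat R n)) 0) => [->|Fn]; first by rewrite mul0r.
  exfalso; move/negP: nin; apply.
  have [f <-] := @phi_surj R d N n (fun i => hFs _ Fn i).
  by rewrite inE; exists f.
rewrite esum_image; last by move=> f g _ _; apply: phi_inj.
rewrite esum_fset; [|exact: finite_finset|by move=> i _].
rewrite (fsbigE (enum {ffun 'I_d -> 'I_(N.*2.+1)})) //; last first.
  by move=> i _; rewrite mem_enum.
  by exact: enum_uniq.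
rewrite sumEFin lee_fin.
pose h := fun i : {ffun 'I_d -> 'I_(N.*2.+1)} => F (lat R (phi i)) * G (L *m lat R (phi i)).
have -> : \sum_(i <- enum {ffun 'I_d -> 'I_(N.*2.+1)} | i \in [set: {ffun 'I_d -> 'I_(N.*2.+1)}]%classic)
   F (lat R (phi i)) * G (L *m lat R (phi i)) = \sum_i h i.
  rewrite -big_enum; apply: eq_bigl => i; exact: in_setT.
have LA : forall (f : {ffun 'I_d -> 'I_(N.*2.+1)}) (i : 'I_m), (L *m lat R (phi f)) i 0 = dot (fun j => L i j) f.
  by move=> f i; rewrite mxE /dot; apply: eq_bigr => j _; rewrite lat_phi.
rewrite mulr_natr -sumr_const [X in _ <= X]big_mkcond /=; apply: ler_sum => f _.
case: ifPn => fA.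
  rewrite /h; apply: (le_trans _ (@sup_norm_ub R m G hG (L *m lat R (phi f)))).
  apply: ler_piMl; [by case/andP: (hG (L *m lat R (phi f))) | by case/andP: (hF (lat R (phi f)))].
rewrite /h; case: (eqVneq (G (L *m lat R (phi f))) 0) => [->|Gn]; first by rewrite mulr0.
exfalso; move/negP: fA; apply.
rewrite inE; apply/andP; split.
  by apply/forallP => i; rewrite inE.
apply/allP => r /mapP[i _ ->]; rewrite -LA; exact: hGs.
Qed.

Lemma comb_rows (R : realType) m d (L : 'M[R]_(m, d)) a j :
  comb (map (fun i : 'I_m => fun j : 'I_d => L i j) (enum 'I_m)) a j = \sum_(i < m) a i * L i j.
Proof.
rewrite comb_sum.
rewrite -(big_mkord xpredT (fun k => a k * nth (fun _ => 0) (map (fun i : 'I_m => fun j : 'I_d => L i j) (enum 'I_m)) k j)).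
rewrite size_map size_enum_ord big_mkord; apply: eq_bigr => i _.
by rewrite (nth_map i) ?size_enum_ord // nth_ord_enum.
Qed.

Local Open Scope classical_set_scope.

Theorem lemma3p2 (R : realType) (m d : nat) (c C eps : R) :
  (d >= m.+1)%N -> 0 < c -> 0 < C -> 0 < eps ->
  exists K : R, 0 < K /\
  forall (N : nat) (L : 'M[R]_(m, d)) (F : 'cV[R]_d -> R) (G : 'cV[R]_m -> R),
    (0 < N)%N ->
    (forall y : 'cV[R]_m, exists x : 'cV[R]_d, L *m x = y) ->
    mx_max_abs L <= C ->
    (c%:E <= mx_dist L (Vrank R m d))%E ->
    (forall x, 0 <= F x <= 1) ->
    (forall x, F x != 0 -> forall i, `|x i ord0| <= N%:R) ->
    (forall y, 0 <= G y <= 1) ->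
    (forall y, G y != 0 -> forall i, `|y i ord0| <= eps) ->
    (T_LFGN N L F G <= (K * sup_norm G)%:E)%E.
Proof.
move=> hd c0 C0 e0.
exists (Kc c m C eps * 3%:R ^+ (d - m)); split.
  by rewrite mulr_gt0 ?exprn_gt0 ?ltr0n // Kc_gt0 // ltW.
move=> N L F G N0 _ LC Ldist hF hFs hG hGs.
set rows := map (fun i : 'I_m => fun j : 'I_d => L i j) (enum 'I_m).
have hrows : size rows = m by rewrite size_map size_enum_ord.
have hdual : dual rows finset.set0 c.
  move=> a k M hk M0 HM.
  have hk' : (k < m)%N by rewrite -hrows.
  apply: (@dist_dual R m d L c (fun i => a i) (Ordinal hk') M Ldist M0).
  by move=> j; rewrite -comb_rows; apply: HM; rewrite inE.
have hb : forall r, r \in rows -> forall i, `|r i| <= C.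
  move=> r /mapP[i _ ->] j; exact: le_trans (@entry_le R m d L i j) LC.
have hc := @count_main R d N c c0 m rows finset.set0 C eps hrows (ltW C0) (ltW e0) hdual hb.
rewrite finset.setC0 cardsT card_ord in hc.
have he := @esum_bound R m d N L F G eps hF hFs hG hGs.
rewrite /T_LFGN.
have x0 : 0 <= N%:R ^- (d - m) :> R by rewrite invr_ge0 exprn_ge0.
apply: (le_trans (lee_wpmul2l _ he)); first by rewrite lee_fin.
rewrite -EFinM lee_fin.
rewrite -/rows.
set X := #|Aset N rows finset.set0 eps|%:R in hc *.
have s0 : 0 <= sup_norm G.
  by apply: le_trans (@sup_norm_ub R m G hG 0); case/andP: (hG 0).
set P : R := (N.*2.+1)%:R in hc.
have P0 : 0 < P by rewrite ltr0n.
set k := (d - m)%N in x0 *.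
have hX : X <= Kc c m C eps * P ^+ k.
  rewrite -(@ler_pM2r _ (P ^+ m)); last exact: exprn_gt0.
  have ed : (k + m = d)%N by rewrite /k subnK // ltnW.
  by rewrite -mulrA -exprD ed.
have hP : P ^+ k <= 3%:R ^+ k * N%:R ^+ k.
  rewrite -exprMn; apply: lerXn2r; rewrite ?nnegrE ?ler0n ?mulr_ge0 //.
  by rewrite -natrM ler_nat; lia.
have N0' : 0 < N%:R ^+ k :> R by rewrite exprn_gt0 // ltr0n.
rewrite mulrCA [X in _ <= X]mulrC; apply: ler_wpM2l => //.
rewrite mulrC ler_pdivrMr //.
apply: (le_trans hX); rewrite -mulrA; apply: ler_wpM2l; last exact: hP.
by rewrite ltW // Kc_gt0 // ltW.
Qed.
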